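(* Let $(X,\Gamma)$ be a $(\mu,\nu)$-path system space. For every $\delta\ge0$, $\varepsilon\ge0$, $\theta\ge0$ there exists $L\ge0$ with the following property. Let $Y_0,A_1,Y_1,\dots,A_n,Y_n\subseteq X$ be non-empty subsets forming a $(\delta,\varepsilon,L)$-buffering sequence. Then for every $i\in\{1,\dots,n\}$, $d_{A_i}(Y_0,Y_i)>\theta$.
   Context: A path is a rectifiable continuous map $\alpha\colon[a,b]\to X$ parametrised by arc length; it is a $(\kappa,\lambda)$-quasi-geodesic if $d(\alpha(t),\alpha(t'))\le|t-t'|\le\kappa d(\alpha(t),\alpha(t'))+\lambda$. A $(\mu,\nu)$-path system space $(X,\Gamma)$ is a geodesic metric space $X$ with a collection $\Gamma$ of paths closed under subpaths, such that any two points are joined by an element of $\Gamma$ and every element is a $(\mu,\nu)$-quasi-geodesic. A map $\pi_A\colon X\to A$ onto a subset $A$ is $\delta$-constricting if (CS1) $d(x,\pi_A(x))\le\delta$ for $x\in A$, and (CS2) for all $x,y\in X$ and $\gamma\in\Gamma$ joining $x$ to $y$, if $d(\pi_A(x),\pi_A(y))>\delta$ then $\gamma$ meets $B_X(\pi_A(x),\delta)$ and $B_X(\pi_A(y),\delta)$. Notation: $d_A(x,y)=d(\pi_A(x),\pi_A(y))$, $\operatorname{diam}_A(Y)=\operatorname{diam}(\pi_A(Y))$, $d_A(Y,Z)=d(\pi_A(Y),\pi_A(Z))$ (infimum of distances). A sequence $Y_0,A_1,Y_1,\dots,A_n,Y_n$ of non-empty subsets is $(\delta,\varepsilon,L)$-buffering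 if for each $i\in\{1,\dots,n\}$ there is a $\delta$-constricting map $\pi_{A_i}\colon X\to A_i$ such that: (BS1) if $i\ne n$, $\max\{\operatorname{diam}_{A_i}(A_{i+1}),\operatorname{diam}_{A_{i+1}}(A_i)\}\le\varepsilon$; (BS2) $\max\{\operatorname{diam}_{A_i}(Y_{i-1}),\operatorname{diam}_{A_i}(Y_i)\}\le\varepsilon$; (BS3) $\max\{d(A_i,Y_{i-1}),d(A_i,Y_i)\}\le\varepsilon$; (BS4) $d_{A_i}(Y_{i-1},Y_i)\ge L$. *)

(* Defs.v *)
From Stdlib Require Import Reals.
From Coquelicot Require Import Coquelicot.
Open Scope R_scope.

Section Defs.
Variable X : Type.
Variable d : X -> X -> R.

Definition is_metric : Prop :=
  (forall x y, 0 <= d x y) /\ (forall x y, d x y = 0 <-> x = y) /\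
  (forall x y, d x y = d y x) /\ (forall x y z, d x z <= d x y + d y z).

Definition is_geodesic_space : Prop :=
  is_metric /\
  forall x y, exists g : R -> X, g 0 = x /\ g (d x y) = y /\
    forall t t', 0 <= t <= d x y -> 0 <= t' <= d x y -> d (g t) (g t') = Rabs (t - t').

(* a path: a map on the compact interval [pa, pb] (values outside are irrelevant) *)
Record path := Path { pa : R; pb : R; pab : pa <= pb; pf : R -> X }.

Fixpoint psum (f : R -> X) (p : nat -> R) (n : nat) : R :=
  match n with
  | O => 0
  | S k => psum f p k + d (f (p k)) (f (p (S k)))
  end.

Definition is_partition (s t : R) (p : nat -> R) (n : nat) : Prop :=
  p O = s /\ p n = t /\ forall i, (i < n)%nat -> p i <= p (S i).

Definition length_is (f : R -> X) (s t l : R) : Prop :=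
  is_lub (fun r => exists p n, is_partition s t p n /\ r = psum f p n) l.

(* rectifiable path parametrised by arc length: the length of every subpath
   [s,t] equals t - s (this implies rectifiability and 1-Lipschitz continuity) *)
Definition arclength_param (g : path) : Prop :=
  forall s t, pa g <= s -> s <= t -> t <= pb g -> length_is (pf g) s t (t - s).

Definition is_path (g : path) : Prop :=
  arclength_param g /\
  forall t0, pa g <= t0 <= pb g ->
    forall e, 0 < e -> exists dl, 0 < dl /\ forall t, pa g <= t <= pb g ->
      Rabs (t - t0) < dl -> d (pf g t) (pf g t0) < e.

Definition quasi_geodesic (k l : R) (g : path) : Prop :=
  forall t t', pa g <= t <= pb g -> pa g <= t' <= pb g ->
    d (pf g t) (pf g t') <= Rabs (t - t') /\
    Rabs (t - t') <= k * d (pf g t) (pf g t') + l.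

Definition joins (g : path) (x y : X) : Prop := pf g (pa g) = x /\ pf g (pb g) = y.

Definition meets_ball (g : path) (p : X) (r : R) : Prop :=
  exists t, pa g <= t <= pb g /\ d (pf g t) p <= r.

Definition path_system_space (Gamma : path -> Prop) (mu nu : R) : Prop :=
  is_geodesic_space /\
  (forall g, Gamma g -> is_path g) /\
  (* closed under subpaths (allowing a translation of the parameter interval) *)
  (forall g, Gamma g -> forall s t, pa g <= s -> s <= t -> t <= pb g ->
     exists g' c, Gamma g' /\ pa g' = s + c /\ pb g' = t + c /\
       forall u, s <= u <= t -> pf g' (u + c) = pf g u) /\
  (forall x y, exists g, Gamma g /\ joins g x y) /\
  (forall g, Gamma g -> quasi_geodesic mu nu g).

Definition constricting (Gamma : path -> Prop) (A : X -> Prop) (pi : X -> X)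
    (delta : R) : Prop :=
  (forall x, A (pi x)) /\
  (forall x, A x -> d x (pi x) <= delta) /\
  (forall x y g, Gamma g -> joins g x y -> d (pi x) (pi y) > delta ->
     meets_ball g (pi x) delta /\ meets_ball g (pi y) delta).

Definition diam_proj (pi : X -> X) (Y : X -> Prop) : Rbar :=
  Lub_Rbar (fun r => exists y y', Y y /\ Y y' /\ r = d (pi y) (pi y')).

Definition set_dist (P Q : X -> Prop) : Rbar :=
  Glb_Rbar (fun r => exists x y, P x /\ Q y /\ r = d x y).

Definition dproj (pi : X -> X) (Y Z : X -> Prop) : Rbar :=
  set_dist (fun x => exists y, Y y /\ x = pi y) (fun x => exists z, Z z /\ x = pi z).

Definition nonempty (S : X -> Prop) : Prop := exists x, S x.

Definition buffering (Gamma : path -> Prop) (delta eps L : R) (n : nat)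
    (Y A : nat -> X -> Prop) (pi : nat -> X -> X) : Prop :=
  (forall i, (i <= n)%nat -> nonempty (Y i)) /\
  (forall i, (1 <= i <= n)%nat -> nonempty (A i)) /\
  forall i, (1 <= i <= n)%nat ->
    constricting Gamma (A i) (pi i) delta /\
    ((i <> n) -> Rbar_le (diam_proj (pi i) (A (S i))) eps /\
                 Rbar_le (diam_proj (pi (S i)) (A i)) eps) /\
    (Rbar_le (diam_proj (pi i) (Y (i - 1)%nat)) eps /\
     Rbar_le (diam_proj (pi i) (Y i)) eps) /\
    (Rbar_le (set_dist (A i) (Y (i - 1)%nat)) eps /\
     Rbar_le (set_dist (A i) (Y i)) eps) /\
    Rbar_le L (dproj (pi i) (Y (i - 1)%nat) (Y i)).
End Defs.

(* Main.v *)
Require Import Defs.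
From Stdlib Require Import Reals Lra Lia.
From Coquelicot Require Import Coquelicot.
Open Scope R_scope.

Lemma glb_le_elem (E : R -> Prop) (m r : R) :
  Rbar_le m (Glb_Rbar E) -> E r -> m <= r.
Proof.
  intros H Er. destruct (Glb_Rbar_correct E) as [Hlb _].
  exact (Rbar_le_trans _ _ _ H (Hlb r Er)).
Qed.

Lemma glb_ge (E : R -> Prop) (m : R) :
  (forall r, E r -> m <= r) -> Rbar_le m (Glb_Rbar E).
Proof.
  intros H. destruct (Glb_Rbar_correct E) as [_ Hg]. apply Hg.
  intros r Er. simpl. apply H; auto.
Qed.

Lemma glb_small (E : R -> Prop) (e : R) :
  Rbar_le (Glb_Rbar E) e -> exists r, E r /\ r <= e + 1.
Proof.
  intros H. destruct (Classical_Prop.classic (exists r, E r /\ r <= e + 1)) as [h|h]; auto.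
  exfalso. assert (Rbar_le (e+1) (Glb_Rbar E)).
  { apply glb_ge. intros r Er. destruct (Rle_lt_dec r (e+1)); [exfalso; eauto|lra]. }
  pose proof (Rbar_le_trans _ _ _ H0 H). simpl in H1. lra.
Qed.

Lemma lub_elem (E : R -> Prop) (e r : R) :
  Rbar_le (Lub_Rbar E) e -> E r -> r <= e.
Proof.
  intros H Er. destruct (Lub_Rbar_correct E) as [Hub _].
  exact (Rbar_le_trans _ _ _ (Hub r Er) H).
Qed.

Lemma abs_int (a b t1 t2 : R) : a <= t1 <= b -> a <= t2 <= b -> Rabs (t1 - t2) <= Rabs (a - b).
Proof. intros. unfold Rabs; repeat destruct Rcase_abs; lra. Qed.

Lemma mul_bound (mu D r : R) : 0 <= D -> D <= r -> mu * D <= Rabs mu * r.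
Proof.
  intros. apply Rle_trans with (Rabs mu * D).
  - apply Rmult_le_compat_r; auto. apply Rle_abs.
  - apply Rmult_le_compat_l; auto. apply Rabs_pos.
Qed.

Section S.
Variable X : Type.
Variable d : X -> X -> R.
Variable Gamma : path X -> Prop.
Variables mu nu : R.
Hypothesis HP : path_system_space X d Gamma mu nu.
Variable delta : R.
Hypothesis Hdel : 0 <= delta.

Definition CL (r : R) := 2 * delta + Rabs mu * r + Rabs nu.

Lemma met : is_metric X d.
Proof. destruct HP as [[H _] _]. exact H. Qed.

Lemma dpos x y : 0 <= d x y.
Proof. destruct met as [H _]; auto. Qed.
Lemma dsym x y : d x y = d y x.
Proof. destruct met as [_ [_ [H _]]]; auto. Qed.
Lemma dtri x y z : d x z <= d x y + d y z.
Proof. destruct met as [_ [_ [_ H]]]; auto. Qed.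

Lemma CL_lip A pi x y r : constricting X d Gamma A pi delta -> d x y <= r ->
  d (pi x) (pi y) <= CL r.
Proof.
  intros [_ [_ C2]] Hr. unfold CL.
  pose proof (dpos x y). pose proof (Rabs_pos nu).
  assert (0 <= Rabs mu * r) by (apply Rmult_le_pos; [apply Rabs_pos|lra]).
  destruct (Rle_or_lt (d (pi x) (pi y)) delta) as [h|h]; [lra|].
  destruct HP as [_ [_ [_ [Hj Hq]]]].
  destruct (Hj x y) as [g [Gg [J1 J2]]].
  destruct (C2 x y g Gg (conj J1 J2) h) as [[t1 [I1 D1]] [t2 [I2 D2]]].
  pose proof (pab X g).
  destruct (Hq g Gg t1 t2 I1 I2) as [Q1 _].
  destruct (Hq g Gg (pa X g) (pb X g)) as [_ Q2]; try lra.
  rewrite J1, J2 in Q2.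
  pose proof (abs_int _ _ _ _ I1 I2).
  pose proof (mul_bound mu _ _ (dpos x y) Hr).
  pose proof (dtri (pi x) (pf X g t1) (pi y)).
  pose proof (dtri (pf X g t1) (pf X g t2) (pi y)).
  rewrite (dsym (pf X g t1)) in D1. pose proof (Rle_abs nu). lra.
Qed.

Definition K0 := CL (Rabs mu * delta + Rabs nu) + delta + CL delta.

Lemma behrstock A B piA piB x :
  constricting X d Gamma A piA delta -> constricting X d Gamma B piB delta ->
  d (piA x) (piA (piB x)) > delta ->
  d (piB x) (piB (piA x)) <= K0.
Proof.
  intros CA CB Hfar.
  pose proof CA as [A1 [A2 A3]]. pose proof CB as [B1 [B2 B3]].
  destruct HP as [_ [_ [Hsub [Hj Hq]]]].
  destruct (Hj x (piB x)) as [g [Gg [J1 J2]]].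
  destruct (A3 x (piB x) g Gg (conj J1 J2) Hfar) as [[tq [Iq Dq]] _].
  pose proof (pab X g).
  set (q := pf X g tq) in *.
  assert (Hq1 : d (piB q) (piB (piA x)) <= CL delta) by (apply (CL_lip B); auto).
  assert (Hmain : d (piB x) (piB q) <= CL (Rabs mu * delta + Rabs nu) + delta).
  { destruct (Rle_or_lt (d (piB x) (piB q)) delta) as [h|h].
    - unfold CL. pose proof (Rabs_pos mu). pose proof (Rabs_pos nu).
      assert (0 <= Rabs mu * (Rabs mu * delta + Rabs nu)) by
        (apply Rmult_le_pos; [lra| apply Rplus_le_le_0_compat; [apply Rmult_le_pos|]; lra]).
      lra.
    - destruct (Hsub g Gg (pa X g) tq) as [g' [c [Gg' [E1 [E2 E3]]]]]; try lra.
      assert (Jg' : joins X g' x q).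
      { split.
        - rewrite E1, E3; auto; lra.
        - rewrite E2, E3; auto; lra. }
      destruct (B3 x q g' Gg' Jg' h) as [[t' [It' Dt']] _].
      rewrite E1, E2 in It'.
      assert (Hu : pf X g' t' = pf X g (t' - c)).
      { replace t' with ((t' - c) + c) at 1 by ring. apply E3. lra. }
      rewrite Hu in Dt'.
      destruct (Hq g Gg (t' - c) (pb X g)) as [_ Q2]; try lra.
      destruct (Hq g Gg tq (pb X g)) as [Q3 _]; try lra.
      rewrite J2 in Q2, Q3.
      pose proof (mul_bound mu _ _ (dpos _ _) Dt').
      assert (Rabs (tq - pb X g) <= Rabs (t' - c - pb X g)) by
        (unfold Rabs; repeat destruct Rcase_abs; lra).
      assert (d q (piB x) <= Rabs mu * delta + Rabs nu).
      { pose proof (Rle_abs nu). unfold q. lra. }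
      assert (W1 : d (piB q) (piB (piB x)) <= CL (Rabs mu * delta + Rabs nu))
        by (apply (CL_lip B); auto).
      pose proof (B2 (piB x) (B1 x)) as W2.
      pose proof (dtri (piB x) (piB (piB x)) (piB q)) as W3.
      rewrite (dsym (piB q)) in W1. lra. }
  unfold K0. pose proof (dtri (piB x) (piB q) (piB (piA x))). lra.
Qed.

End S.

Theorem mainTheorem9 (X : Type) (d : X -> X -> R) (Gamma : path X -> Prop) (mu nu : R) :
  path_system_space X d Gamma mu nu ->
  forall delta eps theta : R, 0 <= delta -> 0 <= eps -> 0 <= theta ->
  exists L : R, 0 <= L /\
    forall (n : nat) (Y A : nat -> X -> Prop) (pi : nat -> X -> X),
      buffering X d Gamma delta eps L n Y A pi ->
      forall i : nat, (1 <= i <= n)%nat ->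
        Rbar_lt theta (dproj X d (pi i) (Y O) (Y i)).
Proof.
  intros HP delta eps theta Hd He Ht.
  set (C := CL mu nu delta (eps + 1)).
  set (K := K0 mu nu delta + eps + C + eps).
  assert (HC : 0 <= C).
  { unfold C, CL. pose proof (Rabs_pos mu). pose proof (Rabs_pos nu).
    assert (0 <= Rabs mu * (eps+1)) by (apply Rmult_le_pos; lra). lra. }
  assert (HK : 0 <= K).
  { unfold K, K0, CL. pose proof (Rabs_pos mu). pose proof (Rabs_pos nu).
    assert (0 <= Rabs mu * delta) by (apply Rmult_le_pos; lra).
    assert (0 <= Rabs mu * (Rabs mu * delta + Rabs nu)) by (apply Rmult_le_pos; lra).
    lra. }
  exists (K + eps + C + delta + theta + 1). split; [lra|].
  set (L := K + eps + C + delta + theta + 1).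
  intros n Y A pi [HY [HA HB]] i Hi.
  assert (Inv : forall j, (1 <= j <= n)%nat -> forall y0 z, Y O y0 -> Y j z ->
            L - K <= d (pi j y0) (pi j z)).
  { intros j. induction j as [|j IH]; intros Hj y0 z Y0 Yz; [lia|].
    destruct (Nat.eq_dec j 0) as [->|Hj0].
    - destruct (HB 1%nat ltac:(lia)) as [_ [_ [_ [_ H4]]]].
      simpl in H4. pose proof (glb_le_elem _ _ (d (pi 1%nat y0) (pi 1%nat z)) H4).
      assert (L <= d (pi 1%nat y0) (pi 1%nat z)) by (apply H; do 2 eexists; split; [exists y0; eauto|split; [exists z; eauto|reflexivity]]).
      lra.
    - assert (IH' := IH ltac:(lia)).
      destruct (HB j ltac:(lia)) as [CA [B1 [B2 [B3 B4]]]].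
      destruct (HB (S j) ltac:(lia)) as [CB [_ [B2' [B3' B4']]]].
      destruct (B1 ltac:(lia)) as [DAB DBA].
      replace (S j - 1)%nat with j in B2', B3', B4' by lia.
      destruct B2' as [DBY _]. destruct B3' as [SBY _]. destruct B3 as [_ SAY].
      pose proof CA as [CA1 _]. pose proof CB as [CB1 _].
      assert (Bnd : forall y, Y j y -> d (pi (S j) y0) (pi (S j) y) <= K).
      { intros y Yy.
        destruct (glb_small _ _ SBY) as [r [[b [w [Bb [Yw ->]]]] Hr]].
        assert (F1 : d (pi j (pi (S j) y0)) (pi j b) <= eps).
        { apply (lub_elem _ _ _ DAB). do 2 eexists. split; [apply CB1|split; [exact Bb|reflexivity]]. }
        assert (F2 : d (pi j b) (pi j w) <= C) by (apply (CL_lip X d Gamma mu nu HP delta Hd (A j)); auto).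
        assert (F3 : L - K <= d (pi j y0) (pi j w)) by (apply IH'; auto).
        pose proof (dtri X d Gamma mu nu HP (pi j y0) (pi j (pi (S j) y0)) (pi j w)).
        pose proof (dtri X d Gamma mu nu HP (pi j (pi (S j) y0)) (pi j b) (pi j w)).
        assert (Far : d (pi j y0) (pi j (pi (S j) y0)) > delta) by (unfold L in *; lra).
        pose proof (behrstock X d Gamma mu nu HP delta Hd _ _ _ _ y0 CA CB Far) as Hbeh.
        destruct (glb_small _ _ SAY) as [r' [[a [w' [Aa [Yw' ->]]]] Hr']].
        assert (G1 : d (pi (S j) (pi j y0)) (pi (S j) a) <= eps).
        { apply (lub_elem _ _ _ DBA). do 2 eexists. split; [apply CA1|split; [exact Aa|reflexivity]]. }
        assert (G2 : d (pi (S j) a) (pi (S j) w') <= C) by (apply (CL_lip X d Gamma mu nu HP delta Hd (A (S j))); auto).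
        assert (G3 : d (pi (S j) w') (pi (S j) y) <= eps).
        { apply (lub_elem _ _ _ DBY). do 2 eexists. split; [exact Yw'|split; [exact Yy|reflexivity]]. }
        pose proof (dtri X d Gamma mu nu HP (pi (S j) y0) (pi (S j) (pi j y0)) (pi (S j) y)).
        pose proof (dtri X d Gamma mu nu HP (pi (S j) (pi j y0)) (pi (S j) a) (pi (S j) y)).
        pose proof (dtri X d Gamma mu nu HP (pi (S j) a) (pi (S j) w') (pi (S j) y)).
        unfold K. lra. }
      destruct (HY j ltac:(lia)) as [y Yy].
      pose proof (Bnd y Yy) as Z1.
      assert (Z2 : L <= d (pi (S j) y) (pi (S j) z)).
      { apply (glb_le_elem _ _ _ B4'). do 2 eexists. split; [exists y; eauto|split; [exists z; eauto|reflexivity]]. }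
      pose proof (dtri X d Gamma mu nu HP (pi (S j) y) (pi (S j) y0) (pi (S j) z)) as Z3.
      rewrite (dsym X d Gamma mu nu HP (pi (S j) y) (pi (S j) y0)) in Z3. lra. }
  unfold dproj, set_dist.
  apply Rbar_lt_le_trans with (L - K).
  - simpl. unfold L. lra.
  - apply glb_ge. intros r [a [b [[y0 [Y0 ->]] [[z [Yz ->]] ->]]]]. apply Inv; auto.
Qed.
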